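(* Let $A=\begin{pmatrix} a & b\\ c & d\end{pmatrix}$ be a positive $2\times 2$ matrix. Define the positive diagonal matrices \[ X=\begin{pmatrix} \sqrt{cd} & 0\\ 0 & \sqrt{ab}\end{pmatrix},\qquad Y=\begin{pmatrix} \left(a\sqrt{cd}+c\sqrt{ab}\right)^{-1} & 0\\ 0 & \left(b\sqrt{cd}+d\sqrt{ab}\right)^{-1}\end{pmatrix}. \] Then the alternate minimization sequence $(A^{(\ell)})_{\ell\ge 0}$ of $A$ converges to the doubly stochastic matrix \[ S(A)=XAY=\begin{pmatrix} \alpha & \beta\\ \beta & \alpha\end{pmatrix},\qquad \alpha=\frac{\sqrt{ad}}{\sqrt{ad}+\sqrt{bc}},\quad \beta=\frac{\sqrt{bc}}{\sqrt{ad}+\sqrt{bc}}. \]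
   Context: A positive matrix has all entries positive. For an $n\times n$ matrix $A=(a_{i,j})$ let $\mathrm{row}_i(A)=\sum_j a_{i,j}$ and $\mathrm{col}_j(A)=\sum_i a_{i,j}$. A matrix is doubly stochastic if all its row sums and all its column sums equal $1$. For positive $A$ let $X(A)=\mathrm{diag}(1/\mathrm{row}_1(A),\ldots,1/\mathrm{row}_n(A))$ and $Y(A)=\mathrm{diag}(1/\mathrm{col}_1(A),\ldots,1/\mathrm{col}_n(A))$. The alternate minimization sequence of $A$ is defined by $A^{(0)}=A$, $A^{(2k+1)}=A^{(2k)}\,Y(A^{(2k)})$ (column scaling) and $A^{(2k+2)}=X(A^{(2k+1)})\,A^{(2k+1)}$ (row scaling) for $k\ge 0$. *)

(* Defs.v *)
From HB Require Import structures.
From mathcomp Require Import all_boot all_order all_algebra.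
From mathcomp Require Import all_classical all_reals all_analysis.
Set Implicit Arguments. Unset Strict Implicit. Unset Printing Implicit Defensive.
Import Order.TTheory GRing.Theory Num.Theory.
Local Open Scope ring_scope.

Section Defs.
Variable R : realType.

Definition positive_mx n (A : 'M[R]_n) : Prop := forall i j, 0 < A i j.

Definition row_sum n (A : 'M[R]_n) (i : 'I_n) : R := \sum_(j < n) A i j.
Definition col_sum n (A : 'M[R]_n) (j : 'I_n) : R := \sum_(i < n) A i j.

Definition doubly_stochastic n (A : 'M[R]_n) : Prop :=
  (forall i, row_sum A i = 1) /\ (forall j, col_sum A j = 1).

Definition Xsc n (A : 'M[R]_n) : 'M[R]_n := diag_mx (\row_i (row_sum A i)^-1).
Definition Ysc n (A : 'M[R]_n) : 'M[R]_n := diag_mx (\row_j (col_sum A j)^-1).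

(* alternate minimization sequence:
   A^(0) = A, A^(2k+1) = A^(2k) Y(A^(2k)), A^(2k+2) = X(A^(2k+1)) A^(2k+1) *)
Fixpoint am_seq n (A : 'M[R]_n) (l : nat) : 'M[R]_n :=
  match l with
  | 0 => A
  | l'.+1 => let B := am_seq A l' in
             if odd l' then Xsc B *m B else B *m Ysc B
  end.

Definition mx22 (a b c d : R) : 'M[R]_2 :=
  \matrix_(i < 2, j < 2)
    if (i == 0 :> nat) then (if (j == 0 :> nat) then a else b)
    else (if (j == 0 :> nat) then c else d).

End Defs.

(* Main.v *)
Require Import Defs.
From HB Require Import structures.
From mathcomp Require Import all_boot all_order all_algebra.
From mathcomp Require Import all_classical all_reals all_analysis.
From mathcomp Require Import ring lra zify.
Import Order.TTheory GRing.Theory Num.Theory.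
Import numFieldNormedType.Exports.
Local Open Scope classical_set_scope.
Local Open Scope ring_scope.

Ltac nz := try done; repeat (apply/andP; split); try done; apply: lt0r_neq0; rewrite ?(addr_gt0, mulr_gt0, exprn_gt0, ltr0n, invr_gt0) //.

Lemma cvg_evenodd (R : realType) (x : nat -> R) (L : R) :
  (fun k => x (k.*2)) @ \oo --> L -> (fun k => x (k.*2.+1)) @ \oo --> L -> x @ \oo --> L.
Proof.
move=> /cvgrPdist_lt He /cvgrPdist_lt Ho; apply/cvgrPdist_lt => e e0.
have [N1 _ H1] := He e e0. have [N2 _ H2] := Ho e e0.
exists (N1 + N2).*2 => // n /= hn.
have h := odd_double_half n; move: (n./2) h => m.
case: (odd n) => /= h; subst n.
- by apply: H2 => /=; move: hn; rewrite -!muln2; lia.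
- by apply: H1 => /=; move: hn; rewrite add0n -!muln2; lia.
Qed.

Lemma cvg_evenodd' (R : realType) (x f g : nat -> R) (L : R) :
  (forall k, x k.*2 = f k) -> (forall k, x k.*2.+1 = g k) ->
  f @ \oo --> L -> g @ \oo --> L -> x @ \oo --> L.
Proof.
move=> Ef Eg hf hg; apply: cvg_evenodd.
  by rewrite (_ : (fun k => x k.*2) = f) //; apply: funext.
by rewrite (_ : (fun k => x k.*2.+1) = g) //; apply: funext.
Qed.

Definition mob {R : realType} (al be ga de u : R) := (al * u + be) / (ga * u + de).

Lemma mob_cvg (R : realType) (u : nat -> R) (x al be ga de : R) :
  u @ \oo --> x -> ga * x + de != 0 ->
  (fun k => mob al be ga de (u k)) @ \oo --> mob al be ga de x.
Proof.
move=> hu hx; rewrite /mob.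
apply: cvgM.
  apply: cvgD; last exact: cvg_cst.
  by apply: cvgMr.
apply: cvgV => //.
apply: cvgD; last exact: cvg_cst.
by apply: cvgMr.
Qed.

Section Alg.
Variables (R : realType) (a b c d : R).
Hypotheses (ha : 0 < a) (hb : 0 < b) (hc : 0 < c) (hd : 0 < d).

Definition KK := a * d + b * c.
Definition ff (u : R) := mob KK (2 * c * d) (2 * a * b) KK u.
Definition M1 u := mx22 (mob a 0 a c u) (mob b 0 b d u) (mob 0 c a c u) (mob 0 d b d u).
Definition M2 u := mx22 (mob (a*b) (a*d) (2*a*b) KK u) (mob (b*a) (b*c) (2*a*b) KK u)
                        (mob (c*b) (c*d) KK (2*c*d) u) (mob (d*a) (d*c) KK (2*c*d) u).

Lemma mx22E (x y z w : R) i j : mx22 x y z w i j =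
  if (i == 0 :> nat) then (if (j == 0 :> nat) then x else y)
    else (if (j == 0 :> nat) then z else w).
Proof. by rewrite mxE. Qed.

Lemma sum2 (F : 'I_2 -> R) : \sum_(i < 2) F i = F 0 + F 1.
Proof. rewrite !big_ord_recl big_ord0 addr0; congr (_ + F _); exact: val_inj. Qed.

Lemma pos u : 0 < u -> [/\ 0 < a * u + c, 0 < b * u + d, 0 < 2*a*b*u + KK & 0 < KK * u + 2*c*d].
Proof.
move=> hu; rewrite /KK.
have h1 := mulr_gt0 ha hu. have h2 := mulr_gt0 hb hu. have h3 := mulr_gt0 ha hd.
have h4 := mulr_gt0 hb hc. have h5 := mulr_gt0 hc hd. have h6 := mulr_gt0 h1 hb.
have h7 := mulr_gt0 (addr_gt0 h3 h4) hu.
split; nra.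
Qed.

Lemma step1 : am_seq (mx22 a b c d) 1 = M1 1.
Proof.
rewrite /= /Ysc mul_mx_diag; apply/matrixP => i j; rewrite !mxE /col_sum sum2 !mxE /mob.
have [p1 p2 p3 p4] := pos 1 ltr01.
case: i => [[|[|i]] Hi] //; case: j => [[|[|j]] Hj] //=; field; rewrite ?mulr1; lra.
Qed.


Lemma ff_gt0 u : 0 < u -> 0 < ff u.
Proof.
move=> hu; have [p1 p2 p3 p4] := pos u hu; rewrite /ff /mob.
apply: divr_gt0 => //; rewrite /KK; nra.
Qed.

Lemma stepA u : 0 < u -> Xsc (M1 u) *m M1 u = M2 u.
Proof.
move=> hu; rewrite /Xsc mul_diag_mx; apply/matrixP => i j; rewrite !mxE /row_sum sum2 !mxE /mob.
have [p1 p2 p3 p4] := pos u hu.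
case: i => [[|[|i]] Hi] //; case: j => [[|[|j]] Hj] //=; rewrite /KK in p3 p4 *; field;
  by repeat (apply/andP; split); apply: lt0r_neq0; rewrite ?(addr_gt0, mulr_gt0, ltr0n).
Qed.

Lemma stepB u : 0 < u -> M2 u *m Ysc (M2 u) = M1 (ff u).
Proof.
move=> hu; rewrite /Ysc mul_mx_diag; apply/matrixP => i j; rewrite !mxE /col_sum sum2 !mxE /ff /mob.
have [p1 p2 p3 p4] := pos u hu.
case: i => [[|[|i]] Hi] //; case: j => [[|[|j]] Hj] //=; rewrite /KK in p3 p4 *; field.
all: by repeat (apply/andP; split); apply: lt0r_neq0; rewrite ?(addr_gt0, mulr_gt0, ltr0n).
Qed.


Definition useq k := iter k ff 1.

Lemma useq_gt0 k : 0 < useq k.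
Proof. elim: k => [|k IH] /=; [exact: ltr01 | exact: ff_gt0]. Qed.

Lemma am_seqE k : am_seq (mx22 a b c d) k.*2.+1 = M1 (useq k) /\
                  am_seq (mx22 a b c d) k.*2.+2 = M2 (useq k).
Proof.
set A := mx22 a b c d.
have Sodd n : am_seq A (n.*2.+2) = Xsc (am_seq A n.*2.+1) *m am_seq A n.*2.+1.
  change (am_seq A n.*2.+2) with (if odd n.*2.+1 then Xsc (am_seq A n.*2.+1) *m am_seq A n.*2.+1 else am_seq A n.*2.+1 *m Ysc (am_seq A n.*2.+1)).
  by rewrite oddS odd_double.
have Sev n : am_seq A (n.*2.+1) = am_seq A n.*2 *m Ysc (am_seq A n.*2).
  change (am_seq A n.*2.+1) with (if odd n.*2 then Xsc (am_seq A n.*2) *m am_seq A n.*2 else am_seq A n.*2 *m Ysc (am_seq A n.*2)).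
  by rewrite odd_double.
elim: k => [|k [IH1 IH2]].
  by split; [exact: step1 | rewrite Sodd step1 stepA ?ltr01].
have E1 : am_seq A (k.+1).*2.+1 = M1 (useq k.+1).
  by rewrite Sev doubleS IH2 stepB ?useq_gt0.
by split => //; rewrite Sodd E1 stepA ?useq_gt0.
Qed.

Variable s : R.
Hypotheses (hs0 : 0 < s) (hs : a * b * s ^+ 2 = c * d).

Definition lam := (KK - 2 * a * b * s) / (KK + 2 * a * b * s).
Definition ww u := (u - s) / (u + s).

Lemma ww_ff u : 0 < u -> ww (ff u) = lam * ww u.
Proof.
move=> hu; have [p1 p2 p3 p4] := pos u hu.
have h1 : KK * u + 2 * c * d - s * (2 * a * b * u + KK) = (u - s) * (KK - 2 * a * b * s).
  by rewrite -mulrA -hs; ring.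
have h2 : KK * u + 2 * c * d + s * (2 * a * b * u + KK) = (u + s) * (KK + 2 * a * b * s).
  by rewrite -mulrA -hs; ring.
have q1 : 0 < KK + 2 * a * b * s by rewrite /KK ?(addr_gt0, mulr_gt0, ltr0n).
have q2 : 0 < u + s by rewrite addr_gt0.
rewrite /ww /ff /mob /lam.
have -> : (KK * u + 2 * c * d) / (2 * a * b * u + KK) - s =
   (KK * u + 2 * c * d - s * (2 * a * b * u + KK)) / (2 * a * b * u + KK).
  by field; apply: lt0r_neq0.
have -> : (KK * u + 2 * c * d) / (2 * a * b * u + KK) + s =
   (KK * u + 2 * c * d + s * (2 * a * b * u + KK)) / (2 * a * b * u + KK).
  by field; apply: lt0r_neq0.
rewrite h1 h2; field.
by repeat (apply/andP; split); apply: lt0r_neq0.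
Qed.

Lemma useq_cvg : useq @ \oo --> s.
Proof.
have q1 : 0 < KK + 2 * a * b * s by rewrite /KK ?(addr_gt0, mulr_gt0, ltr0n).
have hl : `|lam| < 1.
  rewrite /lam normrM normfV (gtr0_norm q1) ltr_pdivrMr // mul1r.
  have hK : 0 < KK by rewrite /KK ?(addr_gt0, mulr_gt0).
  have hx : 0 < 2 * a * b * s by rewrite ?(mulr_gt0, ltr0n).
  move: hK hx; set K := KK; set x := 2 * a * b * s => hK hx.
  rewrite ltr_norml; apply/andP; split; lra.
have E : forall k, ww (useq k) = lam ^+ k * ww 1.
  elim => [|k IH]; first by rewrite mul1r.
  by rewrite /= ww_ff ?useq_gt0 // -/(useq k) IH exprS mulrA.
have F : useq = fun k => mob s s (-1) 1 (lam ^+ k * ww 1).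
  apply: funext => k; rewrite -E /ww /mob.
  have := useq_gt0 k => hk.
  field; apply/andP; split; apply: lt0r_neq0; first by rewrite addr_gt0.
  have -> : -1 * (useq k - s) + (useq k + s) = 2 * s by ring.
  by rewrite mulr_gt0.
rewrite F.
have H : (fun k => mob s s (-1) 1 (lam ^+ k * ww 1)) @ \oo --> mob s s (-1) 1 0.
  apply: mob_cvg; last by rewrite mulr0 add0r oner_neq0.
  rewrite -(mul0r (ww 1)); apply: cvgMl; exact: cvg_expr.
by rewrite (_ : mob s s (-1) 1 0 = s) in H; last by rewrite /mob !mulr0 !add0r divr1.
Qed.

End Alg.

Lemma sq2 (R : realType) (x y : R) : 0 < x -> 0 < y -> Num.sqrt (x ^+ 2 * y ^+ 2) = x * y.
Proof.
by move=> hx hy; rewrite -exprMn sqrtr_sqr ger0_norm // mulr_ge0 // ltW.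
Qed.

Lemma diag_prod (R : realType) (x w a b c d y z : R) :
  mx22 x 0 0 w *m mx22 a b c d *m mx22 y 0 0 z =
  mx22 (x*a*y) (x*b*z) (w*c*y) (w*d*z).
Proof.
apply/matrixP => i j; rewrite !mxE sum2; rewrite !mxE !sum2 !mxE.
by case: i => [[|[|i]] Hi] //; case: j => [[|[|j]] Hj] //=; ring.
Qed.

Lemma sqrt_ex {R : realType} {a : R} (ha : 0 < a) : exists2 r, 0 < r & a = r ^+ 2.
Proof. by exists (Num.sqrt a); rewrite ?sqrtr_gt0 ?sqr_sqrtr // ltW. Qed.

Theorem theorem4 (R : realType) (a b c d : R) :
  0 < a -> 0 < b -> 0 < c -> 0 < d ->
  let A := mx22 a b c d in
  let X := mx22 (Num.sqrt (c * d)) 0 0 (Num.sqrt (a * b)) in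
  let Y := mx22 (a * Num.sqrt (c * d) + c * Num.sqrt (a * b))^-1 0 0
                (b * Num.sqrt (c * d) + d * Num.sqrt (a * b))^-1 in
  let alpha := Num.sqrt (a * d) / (Num.sqrt (a * d) + Num.sqrt (b * c)) in
  let beta := Num.sqrt (b * c) / (Num.sqrt (a * d) + Num.sqrt (b * c)) in
  let S := X *m A *m Y in
  [/\ S = mx22 alpha beta beta alpha,
      doubly_stochastic S &
      forall i j : 'I_2, (fun l => am_seq A l i j) @ \oo --> S i j].
Proof.
move=> ha hb hc hd.
have [ra ra0 Ea] := sqrt_ex ha. have [rb rb0 Eb] := sqrt_ex hb.
have [rc rc0 Ec] := sqrt_ex hc. have [rd rd0 Ed] := sqrt_ex hd.
move=> A X Y alpha beta S.
have ES : S = mx22 (rc*rd*a*(a*(rc*rd) + c*(ra*rb))^-1) (rc*rd*b*(b*(rc*rd) + d*(ra*rb))^-1)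
                   (ra*rb*c*(a*(rc*rd) + c*(ra*rb))^-1) (ra*rb*d*(b*(rc*rd) + d*(ra*rb))^-1).
  by rewrite /S /X /Y /A diag_prod Ec Ed Ea Eb !sq2.
have Eal : alpha = ra * rd / (ra * rd + rb * rc) by rewrite /alpha Ea Eb Ec Ed !sq2.
have Ebe : beta = rb * rc / (ra * rd + rb * rc) by rewrite /beta Ea Eb Ec Ed !sq2.
have EA : A = mx22 a b c d by [].
clearbody A X Y alpha beta S.
subst a b c d alpha beta.
have p1 := mulr_gt0 ra0 rb0. have p2 := mulr_gt0 rc0 rd0.
have p3 := mulr_gt0 ra0 rd0. have p4 := mulr_gt0 rb0 rc0.
have S1 : S = mx22 (ra * rd / (ra * rd + rb * rc)) (rb * rc / (ra * rd + rb * rc))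
                  (rb * rc / (ra * rd + rb * rc)) (ra * rd / (ra * rd + rb * rc)).
  rewrite ES; congr mx22; field; 
  by repeat (apply/andP; split); apply: lt0r_neq0; rewrite ?(addr_gt0, mulr_gt0, exprn_gt0).
split => //.
  rewrite S1; split => i; rewrite /row_sum /col_sum sum2 !mx22E;
  (case: i => [[|[|i]] Hi] //=; field; by rewrite ?lt0r_neq0 ?addr_gt0).
move=> i j.
set s := rc * rd / (ra * rb).
have s0 : 0 < s by rewrite divr_gt0.
have hs : ra ^+ 2 * rb ^+ 2 * s ^+ 2 = rc ^+ 2 * rd ^+ 2.
  by rewrite /s; field; nz.
have pa := exprn_gt0 2 ra0. have pb := exprn_gt0 2 rb0.
have pc := exprn_gt0 2 rc0. have pd := exprn_gt0 2 rd0.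
have U := @useq_cvg R _ _ _ _ pa pb pc pd s s0 hs.
have E1 : S = M1 R (ra ^+ 2) (rb ^+ 2) (rc ^+ 2) (rd ^+ 2) s.
  rewrite ES /M1 /mob /s; congr mx22; field; nz.
have E2 : S = M2 R (ra ^+ 2) (rb ^+ 2) (rc ^+ 2) (rd ^+ 2) s.
  rewrite ES /M2 /KK /mob /s; congr mx22; field; nz.
rewrite EA -cvg_shiftS.
apply: (@cvg_evenodd' R _ (fun k => M1 R (ra ^+ 2) (rb ^+ 2) (rc ^+ 2) (rd ^+ 2) (useq R (ra ^+ 2) (rb ^+ 2) (rc ^+ 2) (rd ^+ 2) k) i j)
   (fun k => M2 R (ra ^+ 2) (rb ^+ 2) (rc ^+ 2) (rd ^+ 2) (useq R (ra ^+ 2) (rb ^+ 2) (rc ^+ 2) (rd ^+ 2) k) i j)).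
- by move=> k; exact: (congr1 (fun M : 'M[R]_2 => M i j) (@am_seqE R _ _ _ _ pa pb pc pd k).1).
- by move=> k; exact: (congr1 (fun M : 'M[R]_2 => M i j) (@am_seqE R _ _ _ _ pa pb pc pd k).2).
- rewrite E1 /M1.
  case: i => [[|[|i]] Hi] //; case: j => [[|[|j]] Hj] //; rewrite mx22E /=; under eq_fun do rewrite mx22E /=; apply: mob_cvg => //; nz.
- rewrite E2 /M2 /KK.
  case: i => [[|[|i]] Hi] //; case: j => [[|[|j]] Hj] //; rewrite mx22E /=; under eq_fun do rewrite mx22E /=; apply: mob_cvg => //; nz.
Qed.
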